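(* For every positive integer $n$, $$|S_n(123,132,3241)|=|S_n(132,213,2341)|=f_{n+2}-1,$$ where $f_n$ is the $n$-th Fibonacci number ($f_1=f_2=1$, $f_n=f_{n-1}+f_{n-2}$).
   Context: Permutations are written in one-line notation. A permutation $\sigma\in S_n$ contains $\pi\in S_m$ if there are indices $i_1<\dots<i_m$ such that for all $j<l$, $\sigma_{i_j}<\sigma_{i_l}$ iff $\pi_j<\pi_l$; otherwise $\sigma$ avoids $\pi$. $S_n(\pi^{(1)},\dots,\pi^{(r)})$ is the set of permutations in $S_n$ avoiding all the listed patterns. *)

(* Defs.v *)
From mathcomp Require Import all_boot all_fingroup.
Set Implicit Arguments. Unset Strict Implicit. Unset Printing Implicit Defensive.

(* A permutation sigma in S_n is a {perm 'I_n}; its one-line notation is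
   sigma 0, sigma 1, ..., sigma (n-1) (values shifted to 0..n-1).
   A pattern pi is given by its one-line notation as a sequence of naturals
   (e.g. [:: 1; 2; 3] for 123); only the relative order of entries matters. *)

Definition contains (n : nat) (sigma : {perm 'I_n}) (pi : seq nat) : bool :=
  [exists f : {ffun 'I_(size pi) -> 'I_n},
     [forall j : 'I_(size pi), forall l : 'I_(size pi),
        (j < l)%N ==>
          ((f j < f l)%N &&
           ((sigma (f j) < sigma (f l))%N == (nth 0 pi j < nth 0 pi l)%N))]].

Definition avoids (n : nat) (sigma : {perm 'I_n}) (pi : seq nat) : bool :=
  ~~ contains sigma pi.

Definition Av (n : nat) (pats : seq (seq nat)) : {set {perm 'I_n}} :=
  [set sigma : {perm 'I_n} | all (avoids sigma) pats].

Fixpoint fib (k : nat) : nat :=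
  match k with
  | 0 => 0
  | 1 => 1
  | (k'.+1 as k1).+1 => fib k1 + fib k'
  end.

(* Main.v *)
Require Import Defs.
From mathcomp Require Import all_boot all_fingroup.
From mathcomp Require Import zify.
Set Implicit Arguments. Unset Strict Implicit. Unset Printing Implicit Defensive.


Fixpoint ex2 (Q : nat -> nat -> bool) (s : seq nat) : bool :=
  if s is x :: t then has (Q x) t || ex2 Q t else false.
Fixpoint ex3 (Q : nat -> nat -> nat -> bool) (s : seq nat) : bool :=
  if s is x :: t then ex2 (Q x) t || ex3 Q t else false.
Fixpoint ex4 (Q : nat -> nat -> nat -> nat -> bool) (s : seq nat) : bool :=
  if s is x :: t then ex3 (Q x) t || ex4 Q t else false.

Lemma ex2_catr Q u v : ex2 Q v -> ex2 Q (u ++ v).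
Proof. by elim: u => //= x u IH H; rewrite IH ?orbT. Qed.
Lemma ex3_catr Q u v : ex3 Q v -> ex3 Q (u ++ v).
Proof. by elim: u => //= x u IH H; rewrite IH ?orbT. Qed.
Lemma ex4_catr Q u v : ex4 Q v -> ex4 Q (u ++ v).
Proof. by elim: u => //= x u IH H; rewrite IH ?orbT. Qed.

Lemma ex2_rcons Q u m : ex2 Q (rcons u m) = ex2 Q u || has (fun a => Q a m) u.
Proof.
elim: u => //= x u IH; rewrite IH has_rcons.
by case: (Q x m); case: (has (Q x) u); case: (ex2 Q u); case: (has _ u).
Qed.
Lemma ex3_rcons Q u m : ex3 Q (rcons u m) = ex3 Q u || ex2 (fun a b => Q a b m) u.
Proof.
elim: u => //= x u IH; rewrite IH ex2_rcons.
by case: (ex2 (Q x) u); case: (has _ u); case: (ex3 Q u); case: (ex2 _ u).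
Qed.
Lemma ex4_rcons Q u m : ex4 Q (rcons u m) = ex4 Q u || ex3 (fun a b c => Q a b c m) u.
Proof.
elim: u => //= x u IH; rewrite IH ex3_rcons.
by case: (ex3 (Q x) u); case: (ex2 _ u); case: (ex4 Q u); case: (ex3 _ u).
Qed.

Lemma ex2_mem Q s : ex2 Q s -> exists a b, [/\ a \in s, b \in s & Q a b].
Proof.
elim: s => //= x s IH /orP [/hasP [b Hb Hq]|/IH [a [b [Ha Hb Hq]]]].
  by exists x, b; rewrite !inE eqxx Hb orbT.
by exists a, b; rewrite !inE Ha Hb !orbT.
Qed.
Lemma ex3_mem Q s : ex3 Q s -> exists a b c, [/\ a \in s, b \in s, c \in s & Q a b c].
Proof.
elim: s => //= x s IH /orP [/ex2_mem [b [c [Hb Hc Hq]]]|/IH [a [b [c [Ha Hb Hc Hq]]]]].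
  by exists x, b, c; rewrite !inE eqxx Hb Hc !orbT.
by exists a, b, c; rewrite !inE Ha Hb Hc !orbT.
Qed.
Lemma ex4_mem Q s : ex4 Q s -> exists a b c d,
  [/\ a \in s, b \in s, c \in s, d \in s & Q a b c d].
Proof.
elim: s => //= x s IH /orP [/ex3_mem [b [c [d [Hb Hc Hd Hq]]]]|/IH [a [b [c [d [Ha Hb Hc Hd Hq]]]]]].
  by exists x, b, c, d; rewrite !inE eqxx Hb Hc Hd !orbT.
by exists a, b, c, d; rewrite !inE Ha Hb Hc Hd !orbT.
Qed.

Lemma ex2_mono (Q Q' : nat -> nat -> bool) (s : seq nat) : (forall a b, a \in s -> b \in s -> Q a b -> Q' a b) ->
  ex2 Q s -> ex2 Q' s.
Proof.
elim: s => //= x s IH H /orP [/hasP [b Hb Hq]|Hs].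
  apply/orP; left; apply/hasP; exists b => //; apply: H => //; rewrite !inE ?eqxx ?Hb ?orbT //.
apply/orP; right; apply: IH Hs => a b Ha Hb; apply: H; by rewrite inE ?Ha ?Hb orbT.
Qed.

Lemma ex2_or (Q1 Q2 : nat -> nat -> bool) s : ex2 (fun a b => Q1 a b || Q2 a b) s = ex2 Q1 s || ex2 Q2 s.
Proof.
elim: s => //= x s ->; rewrite has_predU.
by case: (has _ s); case: (has _ s); case: (ex2 Q1 s); case: (ex2 Q2 s).
Qed.

Lemma ex2_pair (Q : nat -> nat -> bool) (s : seq nat) b c : b \in s -> c \in s -> b != c -> Q b c -> Q c b -> ex2 Q s.
Proof.
elim: s => //= x s IH; rewrite !inE => Hb Hc Hbc Q1 Q2.
case: (eqVneq b x) => [Ebx|Hbx].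
  subst x; have Hc' : c \in s.
    by case/orP: Hc => [/eqP E|//]; rewrite E eqxx in Hbc.
  by apply/orP; left; apply/hasP; exists c.
case: (eqVneq c x) => [Ecx|Hcx].
  subst x; rewrite (negbTE Hbc) /= in Hb.
  by apply/orP; left; apply/hasP; exists b.
rewrite (negbTE Hbx) in Hb; rewrite (negbTE Hcx) in Hc.
by rewrite IH ?orbT.
Qed.

Lemma eq_ex2 (Q Q' : nat -> nat -> bool) (s : seq nat) : uniq s ->
  (forall a b, a \in s -> b \in s -> a != b -> Q a b = Q' a b) -> ex2 Q s = ex2 Q' s.
Proof.
elim: s => //= x s IH /andP [Hx Hu] H; congr orb; last first.
  by apply: IH => // a b Ha Hb; apply: H; rewrite inE ?Ha ?Hb orbT.
apply: eq_in_has => b Hb /=; apply: H; rewrite ?inE ?eqxx ?Hb ?orbT //.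
by apply: contraNneq Hx => ->.
Qed.
Lemma eq_ex3 (Q Q' : nat -> nat -> nat -> bool) (s : seq nat) : uniq s ->
  (forall a b c, a \in s -> b \in s -> c \in s -> uniq [:: a; b; c] -> Q a b c = Q' a b c) ->
  ex3 Q s = ex3 Q' s.
Proof.
elim: s => //= x s IH /andP [Hx Hu] H; congr orb; last first.
  by apply: IH => // a b c Ha Hb Hc; apply: H; rewrite inE ?Ha ?Hb ?Hc orbT.
apply: eq_ex2 => // b c Hb Hc Hbc; apply: H; rewrite ?inE ?eqxx ?Hb ?Hc ?orbT //=.
rewrite negb_or Hbc !andbT.
by apply/andP; split; apply/eqP => E; move: Hx; rewrite E ?Hb ?Hc.
Qed.
Lemma eq_ex4 (Q Q' : nat -> nat -> nat -> nat -> bool) (s : seq nat) : uniq s ->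
  (forall a b c d, a \in s -> b \in s -> c \in s -> d \in s -> uniq [:: a; b; c; d] ->
     Q a b c d = Q' a b c d) ->
  ex4 Q s = ex4 Q' s.
Proof.
elim: s => //= x s IH /andP [Hx Hu] H; congr orb; last first.
  by apply: IH => // a b c d Ha Hb Hc Hd; apply: H; rewrite inE ?Ha ?Hb ?Hc ?Hd orbT.
apply: eq_ex3 => // b c d Hb Hc Hd Hbcd; apply: H; rewrite ?inE ?eqxx ?Hb ?Hc ?Hd ?orbT //.
move: Hbcd; rewrite /= !inE => /andP [-> /andP [-> _]]; rewrite !andbT !negb_or.

by apply/and3P; split; apply/eqP => E; move: Hx; rewrite E ?Hb ?Hc ?Hd.
Qed.


Definition isp n (s : seq nat) := [&& uniq s, size s == n & all (fun x => x < n) s].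

Lemma isp_mem n s : isp n s -> forall x, (x \in s) = (x < n).
Proof.
case/and3P => Hu /eqP Hs /allP Ha x.
have Hsub : {subset s <= iota 0 n} by move=> y Hy; rewrite mem_iota /= Ha.
have := uniq_min_size Hu Hsub; rewrite size_iota Hs leqnn => /(_ isT) [_ E].
by rewrite E mem_iota.
Qed.

Lemma isp_lt n s x : isp n s -> x \in s -> x < n.
Proof. by move=> H; rewrite (isp_mem H). Qed.

Lemma isp_uniq n s : isp n s -> uniq s.
Proof. by case/and3P. Qed.

Lemma all_ltS k (t : seq nat) :
  all (fun x => x < k) t = (k \notin t) && all (fun x => x < k.+1) t.
Proof.
elim: t => //= y t ->; rewrite inE negb_or.
have ->: (y < k) = (k != y) && (y < k.+1) by lia.
by case: (k != y); case: (y < k.+1); case: (k \in t).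
Qed.

Lemma isp_cons_max k t : isp k.+1 (k :: t) = isp k t.
Proof.
rewrite /isp /= eqSS ltnSn /= (all_ltS k).
by case: (k \in t); case: (uniq t); case: (size t == k); case: (all _ t).
Qed.

Lemma isp_rcons_max k t : isp k.+1 (rcons t k) = isp k t.
Proof.
rewrite /isp rcons_uniq size_rcons eqSS all_rcons ltnSn /= (all_ltS k).
by case: (k \in t); case: (uniq t); case: (size t == k); case: (all _ t).
Qed.

Lemma isp_2 k t : isp k.+2 (k :: k.+1 :: t) = isp k t.
Proof.
rewrite /isp /= !eqSS !inE (all_ltS k) (all_ltS k.+1).
have -> : (k == k.+1) = false by lia.
have -> : (k < k.+2) = true by lia.
have -> : (k.+1 < k.+2) = true by lia.
by case: (k \in t); case: (k.+1 \in t); case: (uniq t); case: (size t == k); case: (all _ t).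
Qed.

Fixpoint dn k := if k is k'.+1 then k' :: dn k' else [::].
Fixpoint up k := if k is k'.+1 then rcons (up k') k' else [::].

Lemma isp_dn k : isp k (dn k).
Proof. by elim: k => // k IH /=; rewrite isp_cons_max. Qed.
Lemma isp_up k : isp k (up k).
Proof. by elim: k => // k IH /=; rewrite isp_rcons_max. Qed.

Lemma ex2_false (Q : nat -> nat -> bool) t :
  (forall a b, a \in t -> b \in t -> ~~ Q a b) -> ex2 Q t = false.
Proof.
move=> H; apply/negbTE/negP => /ex2_mem [a [b [Ha Hb Hq]]].
by move: (H a b Ha Hb); rewrite Hq.
Qed.
Lemma ex3_false (Q : nat -> nat -> nat -> bool) t :
  (forall a b c, a \in t -> b \in t -> c \in t -> ~~ Q a b c) -> ex3 Q t = false.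
Proof.
move=> H; apply/negbTE/negP => /ex3_mem [a [b [c [Ha Hb Hc Hq]]]].
by move: (H a b c Ha Hb Hc); rewrite Hq.
Qed.
Lemma ex4_false (Q : nat -> nat -> nat -> nat -> bool) t :
  (forall a b c d, a \in t -> b \in t -> c \in t -> d \in t -> ~~ Q a b c d) -> ex4 Q t = false.
Proof.
move=> H; apply/negbTE/negP => /ex4_mem [a [b [c [d [Ha Hb Hc Hd Hq]]]]].
by move: (H a b c d Ha Hb Hc Hd); rewrite Hq.
Qed.
Lemma has_false (Q : nat -> bool) t :
  (forall a, a \in t -> ~~ Q a) -> has Q t = false.
Proof. by move=> H; apply/negbTE/hasPn. Qed.

Definition P123 a b c := (a < b) && (b < c).
Definition P132 a b c := (a < c) && (c < b).
Definition P213 a b c := (b < a) && (a < c).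
Definition P3241 a b c d := [&& d < b, b < a & a < c].
Definition P2341 a b c d := [&& d < a, a < b & b < c].
Definition goodA s := [&& ~~ ex3 P123 s, ~~ ex3 P132 s & ~~ ex4 P3241 s].
Definition goodB s := [&& ~~ ex3 P132 s, ~~ ex3 P213 s & ~~ ex4 P2341 s].

Ltac bnd H := intros;
  repeat match goal with Hm : is_true (?a \in _) |- _ => have := H _ Hm; clear Hm end;
  rewrite /P123 /P132 /P213 /P3241 /P2341; lia.

Lemma goodA_cons_max x t : (forall y, y \in t -> y < x) -> goodA (x :: t) = goodA t.
Proof.
move=> H; rewrite /goodA /= (ex2_false (Q := P123 x)) ?(ex2_false (Q := P132 x))
  ?(ex3_false (Q := P3241 x)) //; bnd H.
Qed.
Lemma goodB_cons_max x t : (forall y, y \in t -> y < x) -> goodB (x :: t) = goodB t.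
Proof.
move=> H; rewrite /goodB /= (ex2_false (Q := P132 x)) ?(ex2_false (Q := P213 x))
  ?(ex3_false (Q := P2341 x)) //; bnd H.
Qed.
Lemma goodA_cons2 x t : (forall y, y \in t -> y < x) -> goodA (x :: x.+1 :: t) = goodA t.
Proof.
move=> H; rewrite /goodA /= (ex2_false (Q := P123 x)) ?(ex2_false (Q := P132 x))
  ?(ex3_false (Q := P3241 x)) ?(ex2_false (Q := P123 x.+1)) ?(ex2_false (Q := P132 x.+1))
  ?(ex3_false (Q := P3241 x.+1)) ?(has_false (Q := P123 x x.+1)) ?(has_false (Q := P132 x x.+1))
  ?(ex2_false (Q := P3241 x x.+1)) //; bnd H.
Qed.
Lemma goodB_cons2 x t : (forall y, y \in t -> y < x) -> goodB (x :: x.+1 :: t) = goodB t.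
Proof.
move=> H; rewrite /goodB /= (ex2_false (Q := P132 x)) ?(ex2_false (Q := P213 x))
  ?(ex3_false (Q := P2341 x)) ?(ex2_false (Q := P132 x.+1)) ?(ex2_false (Q := P213 x.+1))
  ?(ex3_false (Q := P2341 x.+1)) ?(has_false (Q := P132 x x.+1)) ?(has_false (Q := P213 x x.+1))
  ?(ex2_false (Q := P2341 x x.+1)) //; bnd H.
Qed.


Lemma mem_dn k x : (x \in dn k) = (x < k).
Proof. exact: isp_mem (isp_dn k) x. Qed.
Lemma mem_up k x : (x \in up k) = (x < k).
Proof. exact: isp_mem (isp_up k) x. Qed.

Lemma goodA_sp m M : m <= M -> goodA (rcons (dn m) M).
Proof.
elim: m => [|m IH] HM //=.
have H : forall y, y \in dn m -> y < m by move=> y; rewrite mem_dn.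
move: (IH (ltnW HM)); rewrite /goodA /= (ex2_rcons (P123 m)) (ex2_rcons (P132 m)) (ex3_rcons (P3241 m)).
rewrite (ex2_false (Q := P123 m)) ?(ex2_false (Q := P132 m))
  ?(ex3_false (Q := P3241 m)) ?(has_false (Q := fun a => P123 m a M))
  ?(has_false (Q := fun a => P132 m a M)) ?(ex2_false (Q := fun a b => P3241 m a b M)) //.
all: bnd H.
Qed.

Lemma up_nodesc m : ex2 (fun a b => b < a) (up m) = false.
Proof.
elim: m => //= m IH; rewrite ex2_rcons IH /= has_false //.
by move=> a; rewrite mem_up; lia.
Qed.

Lemma goodB_sp m : goodB (up m).
Proof.
elim: m => [|m IH] //=.
have H : forall y, y \in up m -> y < m by move=> y; rewrite mem_up.
have E2 : ex2 (fun a b => P213 a b m) (up m) = false.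
  apply/negbTE/negP => /(ex2_mono (Q' := fun a b => b < a)) E.
  have : ex2 (fun a b => b < a) (up m) by apply: E => a b _ _ /andP [].
  by rewrite up_nodesc.
rewrite /goodB !ex3_rcons ex4_rcons E2.
rewrite (ex2_false (Q := fun a b => P132 a b m)) ?(ex3_false (Q := fun a b c => P2341 a b c m)) ?orbF //.
all: bnd H.
Qed.

Lemma dn_char k v : isp k v -> ~~ ex2 (fun a b => a < b) v -> v = dn k.
Proof.
elim: k v => [|k IH] [|y v] //=.
- by case/and3P.

move=> Hi; rewrite negb_or => /andP [Hh He].
have Hy : y = k.
  have : y < k.+1 by apply: (isp_lt Hi); rewrite inE eqxx.
  rewrite leq_eqVlt ltnS => /orP [/eqP [] //|Hlt]; exfalso.
  have : k \in v.
    have := isp_mem Hi k; rewrite ltnSn inE; case: eqP => //; lia.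
  by move=> Hk; move/hasPn: Hh => /(_ k Hk); rewrite Hlt.
subst y; rewrite isp_cons_max in Hi; by rewrite (IH v).
Qed.

Lemma up_char k v : isp k v -> ~~ ex2 (fun a b => b < a) v -> v = up k.
Proof.
elim: k v => [|k IH] v.
  by case/and3P => _; case: v.
case/lastP: v => [|v z]; first by case/and3P.
move=> Hi; rewrite ex2_rcons negb_or => /andP [He Hh].
have Hz : z = k.
  have : z < k.+1 by apply: (isp_lt Hi); rewrite mem_rcons inE eqxx.
  rewrite leq_eqVlt ltnS => /orP [/eqP [] //|Hlt]; exfalso.
  have : k \in v.
    have := isp_mem Hi k; rewrite ltnSn mem_rcons inE; case: eqP => //; lia.
  by move=> Hk; move/hasPn: Hh => /(_ k Hk); rewrite Hlt.
subst z; rewrite isp_rcons_max in Hi; by rewrite /= (IH v).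
Qed.


Fixpoint L (sp : nat -> seq nat) (n : nat) : seq (seq nat) :=
  match n with
  | 0 => [:: [::]]
  | 1 => [:: [:: 0]]
  | (k.+1 as k1).+1 =>
      map (cons k1) (L sp k1) ++ map (fun t => k :: k1 :: t) (L sp k)
        ++ (if k is 0 then [::] else [:: sp k.+2])
  end.

Definition spA n := if n is n'.+1 then rcons (dn n') n' else [::].
Definition spB n := up n.

Lemma fib_pos n : 0 < fib n.+1.
Proof. elim/ltn_ind: n => [[|[|n]]] //= IH; have := IH n; lia. Qed.

Lemma size_L sp n : size (L sp n.+1) = (fib n.+3).-1.
Proof.
suff : size (L sp n.+1) = (fib n.+3).-1 /\ size (L sp n.+2) = (fib n.+4).-1 by case.
elim: n => [|n [IH1 IH2]]; first by [].
split => //.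
have E : fib n.+1.+4 = fib n.+4 + fib n.+3 by [].
rewrite [L sp n.+3]/= !size_cat !size_map IH1 IH2 E.
move: (fib_pos n.+2) (fib_pos n.+3); move: (fib n.+3) (fib n.+4) => a b /=; lia.
Qed.

Lemma uniq_L sp : (forall k t, 0 < k -> sp k.+2 != k.+1 :: t /\ sp k.+2 != k :: k.+1 :: t) ->
  forall n, uniq (L sp n).
Proof.
move=> Hsp.
suff : forall n, uniq (L sp n) /\ uniq (L sp n.+1) by move=> H n; case: (H n).
elim => [|n [IH1 IH2]]; first by [].
split => //.
have I1 : injective (cons n.+1) by move=> a b [].
have I2 : injective (fun t => n :: n.+1 :: t) by move=> a b [].
rewrite [L sp n.+2]/= !cat_uniq (map_inj_uniq I1) (map_inj_uniq I2) IH1 IH2 /=.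
rewrite has_cat negb_or.
apply/and3P; split.
- apply/andP; split.
  + apply/hasPn => y /mapP [t _ ->]; apply/mapP => [[t' _ []]]; lia.
  + case: n {IH1 IH2 I1 I2} => // n; rewrite /= orbF; apply/mapP => [[t' _ E]].
    by case: (Hsp n.+1 t' isT) => /eqP.
- case: n {IH1 IH2 I1 I2} => // n; rewrite /= orbF; apply/mapP => [[t' _ E]].
  by case: (Hsp n.+1 t' isT) => _ /eqP.
- by case: n {IH1 IH2 I1 I2}.
Qed.

Lemma L_S sp k : L sp k.+2 = map (cons k.+1) (L sp k.+1) ++ map (fun t => k :: k.+1 :: t) (L sp k)
  ++ (if k is 0 then [::] else [:: sp k.+2]).
Proof. by []. Qed.


Lemma ex3_c1 (Q : nat -> nat -> nat -> bool) x r : ex2 (Q x) r -> ex3 Q (x :: r).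
Proof. by move=> H; rewrite /= H. Qed.
Lemma ex3_ct (Q : nat -> nat -> nat -> bool) x r : ex3 Q r -> ex3 Q (x :: r).
Proof. by move=> H; rewrite /= H orbT. Qed.
Lemma ex4_c2 (Q : nat -> nat -> nat -> nat -> bool) x y r : ex2 (Q x y) r -> ex4 Q (x :: y :: r).
Proof. by move=> H; rewrite /= H. Qed.
Lemma ex2_c1 (Q : nat -> nat -> bool) x r : has (Q x) r -> ex2 Q (x :: r).
Proof. by move=> H; rewrite /= H. Qed.
Lemma has_c1 (Q : nat -> bool) x r : Q x -> has Q (x :: r).
Proof. by move=> H; rewrite /= H. Qed.

Lemma neq_of_notin (x y : nat) (s : seq nat) : x \notin s -> y \in s -> x != y.
Proof. by move=> Hx Hy; apply: contraNneq Hx => ->. Qed.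

Lemma charA n s : (isp n s && goodA s) = (s \in L spA n).
Proof.
elim/ltn_ind: n s => n IH s.
case: n IH => [|[|k]] IH.
- rewrite /= inE; apply/idP/eqP => [/andP [/and3P [_ /eqP Hs _] _]|-> //].
  by case: s Hs.
- apply/idP/idP.
  + case/andP => /and3P [_ Hs Ha] _; case: s Hs Ha => [|x [|]] //= _.
    by rewrite andbT inE; case: x.
  + by rewrite inE => /eqP ->.
apply/idP/idP; last first.
  rewrite L_S !mem_cat => /orP [/mapP [t Ht ->]|/orP [/mapP [t Ht ->]|Hsp]].
  - move: (IH k.+1 (ltnSn _) t); rewrite Ht => /andP [Hi Hg].
    rewrite isp_cons_max Hi goodA_cons_max // => y; exact: isp_lt Hi.
  - move: (IH k (ltnW (ltnSn _)) t); rewrite Ht => /andP [Hi Hg].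
    rewrite isp_2 Hi goodA_cons2 // => y; exact: isp_lt Hi.
  - case: k Hsp IH => // k; rewrite inE => /eqP -> _.
    rewrite /spA; change (isp k.+3 (rcons (dn k.+2) k.+2) && goodA (rcons (dn k.+2) k.+2)).
    by rewrite isp_rcons_max isp_dn goodA_sp.
case/andP => Hi Hg.
case: s Hi Hg => [|x t] Hi Hg; first by case/and3P: Hi.
have Hx : x < k.+2 by apply: (isp_lt Hi); rewrite inE eqxx.
have Hmem := isp_mem Hi.
have Hu := isp_uniq Hi.
case: (ltngtP x k.+1) => [Hlt|Hgt|Exk]; last first.
- subst x; rewrite isp_cons_max in Hi.
  rewrite goodA_cons_max in Hg; last by move=> y; exact: isp_lt Hi.
  rewrite L_S mem_cat; apply/orP; left; apply: map_f.
  by rewrite -IH // Hi Hg.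
- by exfalso; lia.
have Hk1 : k.+1 \in t.
  by move: (Hmem k.+1); rewrite inE ltnS leqnn; case: eqP => //; lia.
have Hxk : x = k.
  case: (ltngtP x k) => // Hxk'; exfalso; last by lia.
  have Hk : k \in t.
    have : k \in x :: t by rewrite Hmem; lia.
    by rewrite inE => /orP [/eqP E|//]; lia.
  have : ex2 (fun b c => P123 x b c || P132 x b c) t.
    apply: (ex2_pair (b := k) (c := k.+1)) => //; rewrite /P123 /P132; lia.
  by rewrite ex2_or => /orP [] H; move: Hg; rewrite /goodA (ex3_c1 H) /= ?andbF.
subst x.
case/splitPr: Hk1 Hi Hg Hu Hmem => u w.
case: u => [|y u] Hi Hg Hu Hmem.
- rewrite /= isp_2 in Hi.
  rewrite /= goodA_cons2 in Hg; last by move=> y; exact: isp_lt Hi.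
  rewrite L_S mem_cat; apply/orP; right; rewrite mem_cat; apply/orP; left.
  by apply: map_f; rewrite -IH // Hi Hg.
have Hyk : y < k.
  have Hy : y < k.+2 by apply: (isp_lt Hi); rewrite !inE eqxx orbT.
  case/andP: Hu => Hk /andP [Hy' _].
  have := neq_of_notin Hk (_ : y \in _) ; rewrite ?inE ?eqxx // => Nky.
  have := neq_of_notin Hy' (_ : k.+1 \in _); rewrite ?mem_cat ?inE ?eqxx ?orbT // => Nyk.
  lia.
have Hw : w = [::].
  case: w Hi Hg Hu Hmem => [//|z w] Hi Hg Hu Hmem; exfalso.
  have Hz : z < k.+2 by apply: (isp_lt Hi); rewrite !inE !mem_cat !inE eqxx !orbT.
  move: Hu; rewrite cons_uniq cat_cons cons_uniq cat_uniq => /andP [Hk /andP [Hy' /and3P [_ _ /andP [Hz' _]]]].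
  have Nkz : k != z by apply: (neq_of_notin Hk); rewrite !inE !mem_cat !inE eqxx !orbT.
  have Nyz : y != z by apply: (neq_of_notin Hy'); rewrite !mem_cat !inE eqxx !orbT.
  have Nk1z : k.+1 != z by apply: (neq_of_notin Hz'); rewrite !inE eqxx.
  case: (ltngtP y z) => Hyz; last by rewrite Hyz eqxx in Nyz.
  + have : ex3 P132 (k :: (y :: u) ++ k.+1 :: z :: w).
      apply: ex3_ct; apply: ex3_c1; apply: ex2_catr; apply: ex2_c1; apply: has_c1.
      rewrite /P132; lia.
    by move=> C; move: Hg; rewrite /goodA C /= andbF.
  + have : ex4 P3241 (k :: (y :: u) ++ k.+1 :: z :: w).
      apply: ex4_c2; apply: ex2_catr; apply: ex2_c1; apply: has_c1.
      rewrite /P3241; lia.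
    by move=> C; move: Hg; rewrite /goodA C /= !andbF.
subst w; rewrite cats1 in Hi Hg.
move: (y :: u) Hi Hg (isT : 0 < size (y :: u)) => U Hi Hg HU.
have HiU : isp k U.
  by move: Hi; rewrite -[k :: rcons U k.+1]/(rcons (k :: U) k.+1) isp_rcons_max isp_cons_max.
have NA : ~~ ex2 (fun a b => a < b) U.
  apply/negP => Ha.
  have : ex3 P123 (k :: rcons U k.+1).
    apply: ex3_ct; rewrite ex3_rcons; apply/orP; right.
    apply: ex2_mono Ha => a b _ Hb Hab; rewrite /P123 Hab /=.
    have := isp_lt HiU Hb; lia.
  by move=> C; move: Hg; rewrite /goodA C.
have EU := dn_char HiU NA.
case: k IH Hi Hg HiU EU HU {Hyk Hmem Hlt Hx Hu} => [|k] IH Hi Hg HiU EU HU.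
  by rewrite EU in HU.
rewrite L_S !mem_cat; apply/orP; right; apply/orP; right.
by rewrite EU cats1 inE; apply/eqP.
Qed.

Lemma charB n s : (isp n s && goodB s) = (s \in L spB n).
Proof.
elim/ltn_ind: n s => n IH s.
case: n IH => [|[|k]] IH.
- rewrite /= inE; apply/idP/eqP => [/andP [/and3P [_ /eqP Hs _] _]|-> //].
  by case: s Hs.
- apply/idP/idP.
  + case/andP => /and3P [_ Hs Ha] _; case: s Hs Ha => [|x [|]] //= _.
    by rewrite andbT inE; case: x.
  + by rewrite inE => /eqP ->.
apply/idP/idP; last first.
  rewrite L_S !mem_cat => /orP [/mapP [t Ht ->]|/orP [/mapP [t Ht ->]|Hsp]].
  - move: (IH k.+1 (ltnSn _) t); rewrite Ht => /andP [Hi Hg].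
    rewrite isp_cons_max Hi goodB_cons_max // => y; exact: isp_lt Hi.
  - move: (IH k (ltnW (ltnSn _)) t); rewrite Ht => /andP [Hi Hg].
    rewrite isp_2 Hi goodB_cons2 // => y; exact: isp_lt Hi.
  - case: k Hsp IH => // k; rewrite inE => /eqP -> _.
    rewrite /spB; change (isp k.+3 (rcons (up k.+2) k.+2) && goodB (rcons (up k.+2) k.+2)).
    by rewrite isp_rcons_max isp_up (goodB_sp k.+3).
case/andP => Hi Hg.
case: s Hi Hg => [|x t] Hi Hg; first by case/and3P: Hi.
have Hx : x < k.+2 by apply: (isp_lt Hi); rewrite inE eqxx.
have Hmem := isp_mem Hi.
have Hu := isp_uniq Hi.
case: (ltngtP x k.+1) => [Hlt|Hgt|Exk]; last first.
- subst x; rewrite isp_cons_max in Hi.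
  rewrite goodB_cons_max in Hg; last by move=> y; exact: isp_lt Hi.
  rewrite L_S mem_cat; apply/orP; left; apply: map_f.
  by rewrite -IH // Hi Hg.
- by exfalso; lia.
have Hk1 : k.+1 \in t.
  have : k.+1 \in x :: t by rewrite Hmem; lia.
  by rewrite inE => /orP [/eqP E|//]; lia.
case/splitPr: Hk1 Hi Hg Hu Hmem => u w.
case: u => [|y u] Hi Hg Hu Hmem.
- have Hxk : x = k.
    case: (ltngtP x k) => // Hxk'; exfalso; last by lia.
    have Hk : k \in w.
      have : k \in x :: k.+1 :: w by rewrite Hmem; lia.
      by rewrite !inE => /orP [/eqP E|/orP [/eqP E|//]]; lia.
    have : ex3 P132 (x :: k.+1 :: w).
      apply: ex3_c1; apply: ex2_c1; apply/hasP; exists k => //; rewrite /P132; lia.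
    by move=> C; move: Hg; rewrite /goodB C.
  subst x.
  rewrite /= isp_2 in Hi.
  rewrite /= goodB_cons2 in Hg; last by move=> y; exact: isp_lt Hi.
  rewrite L_S mem_cat; apply/orP; right; rewrite mem_cat; apply/orP; left.
  by apply: map_f; rewrite -IH // Hi Hg.
move: Hu; rewrite cons_uniq cat_cons cons_uniq => /andP [Hxn /andP [Hyn Hu2]].
have Nxy : x != y by apply: (neq_of_notin Hxn); rewrite !inE eqxx.
have Nyk : y != k.+1 by apply: (neq_of_notin Hyn); rewrite !mem_cat !inE eqxx !orbT.
have Hy : y < k.+2 by apply: (isp_lt Hi); rewrite !inE eqxx orbT.
have Hxy : x < y.
  case: (ltngtP x y) => // Hyx; last by rewrite Hyx eqxx in Nxy.
  have : ex3 P213 (x :: (y :: u) ++ k.+1 :: w).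
    apply: ex3_c1; apply: ex2_c1; apply/hasP; exists k.+1.
      by rewrite mem_cat inE eqxx orbT.
    rewrite /P213; lia.
  by move=> C; move: Hg; rewrite /goodB C /= andbF.
have Hw : w = [::].
  case: w Hi Hg Hu2 Hmem Hxn Hyn => [//|z w] Hi Hg Hu2 Hmem Hxn Hyn; exfalso.
  have Hz : z < k.+2 by apply: (isp_lt Hi); rewrite !inE !mem_cat !inE eqxx !orbT.
  have Nxz : x != z by apply: (neq_of_notin Hxn); rewrite !inE !mem_cat !inE eqxx !orbT.
  move: Hu2; rewrite cat_uniq => /and3P [_ _ /andP [Hz' _]].
  have Nk1z : k.+1 != z by apply: (neq_of_notin Hz'); rewrite !inE eqxx.
  case: (ltngtP x z) => Hxz; last by rewrite Hxz eqxx in Nxz.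
  + have : ex3 P132 (x :: (y :: u) ++ k.+1 :: z :: w).
      apply: ex3_c1; apply: (ex2_catr (y :: u)); apply: ex2_c1; apply: has_c1.
      rewrite /P132; lia.
    by move=> C; move: Hg; rewrite /goodB C.
  + have : ex4 P2341 (x :: (y :: u) ++ k.+1 :: z :: w).
      apply: ex4_c2; apply: ex2_catr; apply: ex2_c1; apply: has_c1.
      rewrite /P2341; lia.
    by move=> C; move: Hg; rewrite /goodB C /= !andbF.
subst w; rewrite cats1 in Hi; rewrite cats1 in Hg; rewrite cats1.
change (is_true (isp k.+2 (rcons (x :: y :: u) k.+1))) in Hi.
change (is_true (goodB (rcons (x :: y :: u) k.+1))) in Hg.
change (is_true (rcons (x :: y :: u) k.+1 \in L spB k.+2)).
move: (x :: y :: u) Hi Hg (isT : 1 < size (x :: y :: u)) => V Hi Hg HV.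
have HiV : isp k.+1 V by move: Hi; rewrite isp_rcons_max.
have ND : ~~ ex2 (fun a b => b < a) V.
  apply/negP => Ha.
  have : ex3 P213 (rcons V k.+1).
    rewrite ex3_rcons; apply/orP; right.
    apply: ex2_mono Ha => a b Ha' _ Hab; rewrite /P213 Hab /=.
    exact: isp_lt HiV Ha'.
  by move=> C; move: Hg; rewrite /goodB C /= andbF.
have EV := up_char HiV ND.
case: k IH Hi Hg HiV EV HV {Hmem Hlt Hx Hy Nyk Hyn Hu2 Hxn} => [|k] IH Hi Hg HiV EV HV.
  by rewrite EV in HV.
rewrite L_S !mem_cat; apply/orP; right; apply/orP; right.
by rewrite EV inE; apply/eqP.
Qed.


Lemma ex2P (Q : nat -> nat -> bool) s :
  reflect (exists i j, [/\ i < j, j < size s & Q (nth 0 s i) (nth 0 s j)]) (ex2 Q s).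
Proof.
elim: s => [|x s IH] /=; first by constructor => [[i [j [_ /ltP]]]]; lia.
apply: (iffP orP).
- case => [/hasP [c Hc HQ]|/IH [i [j [Hij Hj HQ]]]].
    by exists 0, (index c s).+1; rewrite /= nth_index //; split => //; rewrite ltnS index_mem.
  by exists i.+1, j.+1.
- case=> [[|i] [[|j] [Hij Hj HQ]]] //.
    by left; apply/hasP; exists (nth 0 s j) => //; apply: mem_nth.
  by right; apply/IH; exists i, j.
Qed.

Lemma ex3P (Q : nat -> nat -> nat -> bool) s :
  reflect (exists i j k, [/\ i < j, j < k, k < size s &
     Q (nth 0 s i) (nth 0 s j) (nth 0 s k)]) (ex3 Q s).
Proof.
elim: s => [|x s IH] /=; first by constructor => [[i [j [k [_ _ /ltP]]]]]; lia.
apply: (iffP orP).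
- case => [/ex2P [j [k [Hjk Hk HQ]]]|/IH [i [j [k [Hij Hjk Hk HQ]]]]].
    by exists 0, j.+1, k.+1.
  by exists i.+1, j.+1, k.+1.
- case=> [[|i] [[|j] [[|k] [Hij Hjk Hk HQ]]]] //.
    by left; apply/ex2P; exists j, k.
  by right; apply/IH; exists i, j, k.
Qed.

Lemma ex4P (Q : nat -> nat -> nat -> nat -> bool) s :
  reflect (exists i j k l, [/\ i < j, j < k, k < l, l < size s &
     Q (nth 0 s i) (nth 0 s j) (nth 0 s k) (nth 0 s l)]) (ex4 Q s).
Proof.
elim: s => [|x s IH] /=; first by constructor => [[i [j [k [l [_ _ _ /ltP]]]]]]; lia.
apply: (iffP orP).
- case => [/ex3P [j [k [l [Hjk Hkl Hl HQ]]]]|/IH [i [j [k [l [Hij Hjk Hkl Hl HQ]]]]]].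
    by exists 0, j.+1, k.+1, l.+1.
  by exists i.+1, j.+1, k.+1, l.+1.
- case=> [[|i] [[|j] [[|k] [[|l] [Hij Hjk Hkl Hl HQ]]]]] //.
    by left; apply/ex3P; exists j, k, l.
  by right; apply/IH; exists i, j, k, l.
Qed.

Definition oneline n (s : {perm 'I_n}) : seq nat := [seq val (s i) | i <- enum 'I_n].

Lemma size_oneline n (s : {perm 'I_n}) : size (oneline s) = n.
Proof. by rewrite size_map size_enum_ord. Qed.

Lemma nth_oneline n (s : {perm 'I_n}) (i : 'I_n) : nth 0 (oneline s) i = s i.
Proof. by rewrite (nth_map i) ?size_enum_ord // nth_ord_enum. Qed.

Lemma isp_oneline n (s : {perm 'I_n}) : isp n (oneline s).
Proof.
apply/and3P; split.
- rewrite map_inj_uniq ?enum_uniq // => i j /val_inj; exact: perm_inj.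
- by rewrite size_oneline.
- by apply/allP => x /mapP [i _ ->]; exact: ltn_ord.
Qed.

Lemma oneline_inj n : injective (@oneline n).
Proof.
move=> s1 s2 E; apply/permP => i; apply: ord_inj.
by rewrite -!nth_oneline E.
Qed.

Lemma oneline_surj n s : isp n s -> exists p : {perm 'I_n}, oneline p = s.
Proof.
case/and3P => Hu /eqP Hs /allP Ha.
pose f (i : 'I_n) : 'I_n := insubd i (nth 0 s i).
have Hf : forall i : 'I_n, val (f i) = nth 0 s i.
  move=> i; rewrite val_insubd Ha //; apply: mem_nth; rewrite Hs; exact: ltn_ord.
have fi : injective f.
  move=> i j /(congr1 val); rewrite !Hf => /eqP.
  rewrite nth_uniq ?Hs // => /eqP; exact: val_inj.
exists (perm fi); apply: (@eq_from_nth _ 0); first by rewrite size_oneline.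
move=> i; rewrite size_oneline => Hi.
by rewrite (nth_oneline _ (Ordinal Hi)) permE Hf.
Qed.

Lemma contains3 n (sg : {perm 'I_n}) p0 p1 p2 :
  contains sg [:: p0; p1; p2] =
  ex3 (fun a b c => [&& (a < b) == (p0 < p1), (a < c) == (p0 < p2) & (b < c) == (p1 < p2)])
      (oneline sg).
Proof.
apply/existsP/ex3P.
- case=> f /forallP H.
  pose o0 : 'I_3 := @Ordinal 3 0 isT.
  pose o1 : 'I_3 := @Ordinal 3 1 isT.
  pose o2 : 'I_3 := @Ordinal 3 2 isT.
  have H01 := implyP (forallP (H o0) o1) isT.
  have H02 := implyP (forallP (H o0) o2) isT.
  have H12 := implyP (forallP (H o1) o2) isT.
  case/andP: H01 => L01 E01; case/andP: H02 => L02 E02; case/andP: H12 => L12 E12.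
  exists (f o0), (f o1), (f o2); split => //; first by rewrite size_oneline.
  by rewrite !nth_oneline E01 E02 E12.
- case=> i [j [k [Hij Hjk Hk HQ]]]; rewrite size_oneline in Hk.
  pose oi := Ordinal (ltn_trans Hij (ltn_trans Hjk Hk)).
  pose oj := Ordinal (ltn_trans Hjk Hk).
  pose ok := Ordinal Hk.
  have Ei : nth 0 (oneline sg) i = sg oi := nth_oneline sg oi.
  have Ej : nth 0 (oneline sg) j = sg oj := nth_oneline sg oj.
  have Ek : nth 0 (oneline sg) k = sg ok := nth_oneline sg ok.
  rewrite Ei Ej Ek in HQ; case/and3P: HQ => Q1 Q2 Q3.
  exists [ffun x : 'I_3 => if val x == 0 then oi else if val x == 1 then oj else ok].
  apply/forallP => a; apply/forallP => b; apply/implyP => Hab; rewrite !ffunE.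
  case: a b Hab => [[|[|[|a]]] Ha] [[|[|[|b]]] Hb] //= Hab.
  + by rewrite Hij Q1.
  + by rewrite (ltn_trans Hij Hjk) Q2.
  + by rewrite Hjk Q3.
Qed.

Lemma contains4 n (sg : {perm 'I_n}) p0 p1 p2 p3 :
  contains sg [:: p0; p1; p2; p3] =
  ex4 (fun a b c d => [&& (a < b) == (p0 < p1), (a < c) == (p0 < p2), (a < d) == (p0 < p3),
                          (b < c) == (p1 < p2), (b < d) == (p1 < p3) & (c < d) == (p2 < p3)])
      (oneline sg).
Proof.
apply/existsP/ex4P.
- case=> f /forallP H.
  pose o0 : 'I_4 := @Ordinal 4 0 isT.
  pose o1 : 'I_4 := @Ordinal 4 1 isT.
  pose o2 : 'I_4 := @Ordinal 4 2 isT.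
  pose o3 : 'I_4 := @Ordinal 4 3 isT.
  have H01 := implyP (forallP (H o0) o1) isT.
  have H02 := implyP (forallP (H o0) o2) isT.
  have H03 := implyP (forallP (H o0) o3) isT.
  have H12 := implyP (forallP (H o1) o2) isT.
  have H13 := implyP (forallP (H o1) o3) isT.
  have H23 := implyP (forallP (H o2) o3) isT.
  case/andP: H01 => L01 E01; case/andP: H02 => L02 E02; case/andP: H12 => L12 E12.
  case/andP: H03 => L03 E03; case/andP: H13 => L13 E13; case/andP: H23 => L23 E23.
  exists (f o0), (f o1), (f o2), (f o3); split => //; first by rewrite size_oneline.
  by rewrite !nth_oneline E01 E02 E12 E03 E13 E23.
- case=> i [j [k [l [Hij Hjk Hkl Hl HQ]]]]; rewrite size_oneline in Hl.
  have Hk := ltn_trans Hkl Hl.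
  pose oi := Ordinal (ltn_trans Hij (ltn_trans Hjk Hk)).
  pose oj := Ordinal (ltn_trans Hjk Hk).
  pose ok := Ordinal Hk.
  pose ol := Ordinal Hl.
  have Ei : nth 0 (oneline sg) i = sg oi := nth_oneline sg oi.
  have Ej : nth 0 (oneline sg) j = sg oj := nth_oneline sg oj.
  have Ek : nth 0 (oneline sg) k = sg ok := nth_oneline sg ok.
  have El : nth 0 (oneline sg) l = sg ol := nth_oneline sg ol.
  rewrite Ei Ej Ek El in HQ; case/and3P: HQ => Q1 Q2 /and4P [Q3 Q4 Q5 Q6].
  exists [ffun x : 'I_4 => if val x == 0 then oi else if val x == 1 then oj
                           else if val x == 2 then ok else ol].
  apply/forallP => a; apply/forallP => b; apply/implyP => Hab; rewrite !ffunE.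
  case: a b Hab => [[|[|[|[|a]]]] Ha] [[|[|[|[|b]]]] Hb] //= Hab.
  + by rewrite Hij Q1.
  + by rewrite (ltn_trans Hij Hjk) Q2.
  + by rewrite (ltn_trans Hij (ltn_trans Hjk Hkl)) Q3.
  + by rewrite Hjk Q4.
  + by rewrite (ltn_trans Hjk Hkl) Q5.
  + by rewrite Hkl Q6.
Qed.


Lemma avoidsA n (sg : {perm 'I_n}) :
  all (avoids sg) [:: [:: 1; 2; 3]; [:: 1; 3; 2]; [:: 3; 2; 4; 1]] = goodA (oneline sg).
Proof.
have Hu := isp_uniq (isp_oneline sg).
rewrite /= /avoids !contains3 contains4 andbT /goodA.
congr (~~ _ && (~~ _ && ~~ _)).
- apply: eq_ex3 => // a b c _ _ _; rewrite /= !inE !negb_or /P123 => /and3P [/andP [? ?] ? _]; lia.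
- apply: eq_ex3 => // a b c _ _ _; rewrite /= !inE !negb_or /P132 => /and3P [/andP [? ?] ? _]; lia.
- apply: eq_ex4 => // a b c d _ _ _ _; rewrite /= !inE !negb_or /P3241 => /and4P [/and3P [? ? ?] /andP [? ?] ? _].
  lia.
Qed.

Lemma avoidsB n (sg : {perm 'I_n}) :
  all (avoids sg) [:: [:: 1; 3; 2]; [:: 2; 1; 3]; [:: 2; 3; 4; 1]] = goodB (oneline sg).
Proof.
have Hu := isp_uniq (isp_oneline sg).
rewrite /= /avoids !contains3 contains4 andbT /goodB.
congr (~~ _ && (~~ _ && ~~ _)).
- apply: eq_ex3 => // a b c _ _ _; rewrite /= !inE !negb_or /P132 => /and3P [/andP [? ?] ? _]; lia.
- apply: eq_ex3 => // a b c _ _ _; rewrite /= !inE !negb_or /P213 => /and3P [/andP [? ?] ? _]; lia.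
- apply: eq_ex4 => // a b c d _ _ _ _; rewrite /= !inE !negb_or /P2341 => /and4P [/and3P [? ? ?] /andP [? ?] ? _].
  lia.
Qed.

Lemma card_good n (G : seq nat -> bool) (Ls : seq (seq nat)) : uniq Ls ->
  (forall s, (isp n s && G s) = (s \in Ls)) ->
  #|[set sg : {perm 'I_n} | G (oneline sg)]| = size Ls.
Proof.
move=> HU HL; rewrite cardE -(size_map (@oneline n)); apply: perm_size.
apply: uniq_perm => //; first by rewrite map_inj_uniq ?enum_uniq //; exact: oneline_inj.
move=> s; apply/mapP/idP.
- case=> sg; rewrite mem_enum inE => Hg ->; by rewrite -HL isp_oneline Hg.
- rewrite -HL => /andP [Hi Hg]; have [sg Es] := oneline_surj Hi.
  by exists sg => //; rewrite mem_enum inE Es.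
Qed.

Lemma up_head m : exists r, up m.+1 = 0 :: r.
Proof.
elim: m => [|m [r IH]]; first by exists [::].
by exists (rcons r m.+1); rewrite /= -/(up m.+1) IH.
Qed.

Theorem theorem3p4 (n : nat) : (0 < n)%N ->
  #|Av n [:: [:: 1; 2; 3]; [:: 1; 3; 2]; [:: 3; 2; 4; 1]]| = (fib n.+2).-1 /\
  #|Av n [:: [:: 1; 3; 2]; [:: 2; 1; 3]; [:: 2; 3; 4; 1]]| = (fib n.+2).-1.
Proof.
case: n => // n _; split.
- rewrite (_ : Av _ _ = [set sg : {perm 'I_n.+1} | goodA (oneline sg)]); last first.
    by apply/setP => sg; rewrite !inE avoidsA.
  rewrite (card_good (Ls := L spA n.+1)) ?size_L //; last exact: charA.
  apply: uniq_L => k t; case: k => // k _; rewrite /spA /=.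
  by split; apply/eqP => -[]; lia.
- rewrite (_ : Av _ _ = [set sg : {perm 'I_n.+1} | goodB (oneline sg)]); last first.
    by apply/setP => sg; rewrite !inE avoidsB.
  rewrite (card_good (Ls := L spB n.+1)) ?size_L //; last exact: charB.
  apply: uniq_L => k t Hk; rewrite /spB; have [r ->] := up_head k.+1.
  by split; apply/eqP => -[]; lia.
Qed.
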